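(* Let $V$ be a set and $\mathcal{E}, \mathcal{F}$ families of subsets of $V$. Then $\langle V,\mathcal{E},\mathcal{F}\rangle$ has Property S if and only if $\langle V,[\mathcal{E}]_{\mathcal{F}},\mathcal{F}\rangle$ has Property S.
   Context: A transversal for a family is a set that intersects every member of the family. The triple $\langle V,\mathcal{E},\mathcal{F}\rangle$ has Property S if there exists $X \subseteq V$ such that $X$ is a transversal for $\mathcal{E}$ and $V\setminus X$ is a transversal for $\mathcal{F}$. Resolution: for subsets $c_1,\dots,c_n, d, e$ of $V$, $e$ follows from $c_1,\dots,c_n$ by resolution on $d$ if $d = \{v_1,\dots,v_n\}$ with $v_i \in c_i$ for $1\le i\le n$ and $e = \bigcup_{i=1}^n (c_i \setminus \{v_i\})$. For families $\mathcal{A}, \mathcal{D}$ of subsets of $V$, $[\mathcal{A}]_{\mathcal{D}}$ denotes the closure of $\mathcal{A}$ under resolution on members of $\mathcal{D}$: the smallest family containing $\mathcal{A}$ such that whenever $c_1,\dots,c_n$ are in the family and $e$ follows from $c_1,\dots,c_n$ by resolution on some $d \in \mathcal{D}$, then $e$ is in the family. *)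

(* Defs.v *)
From Stdlib Require Import Arith.

Section Defs.
Variable V : Type.

Definition transversal (X : V -> Prop) (fam : (V -> Prop) -> Prop) : Prop :=
  forall A, fam A -> exists x, X x /\ A x.

Definition propertyS (E F : (V -> Prop) -> Prop) : Prop :=
  exists X : V -> Prop, transversal X E /\ transversal (fun x => ~ X x) F.

(* e follows from c_1..c_n (here c 0 .. c (n-1)) by resolution on d,
   with the chosen elements v_i \in c_i, d = {v_1..v_n},
   e = \bigcup_i (c_i \ {v_i}) *)
Definition resolvent (n : nat) (c : nat -> V -> Prop) (v : nat -> V)
  (d e : V -> Prop) : Prop :=
  (forall i, i < n -> c i (v i)) /\
  (forall x, d x <-> exists i, i < n /\ v i = x) /\
  (forall x, e x <-> exists i, i < n /\ c i x /\ x <> v i).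

Inductive res_closure (A D : (V -> Prop) -> Prop) : (V -> Prop) -> Prop :=
| rc_base : forall a, A a -> res_closure A D a
| rc_res : forall (n : nat) (c : nat -> V -> Prop) (v : nat -> V) (d e : V -> Prop),
    (forall i, i < n -> res_closure A D (c i)) ->
    D d -> resolvent n c v d e -> res_closure A D e.

End Defs.

(* Main.v *)
Require Import Defs.

Theorem theorem7 (V : Type) (E F : (V -> Prop) -> Prop) :
  propertyS V E F <-> propertyS V (res_closure V E F) F.
Proof.
  split.
  - intros [X [HE HF]]. exists X. split; [|exact HF].
    intros A HA. induction HA as [a Ha | n c v d e Hc IH Hd [Hv [Hdd Hee]]].
    + apply HE; exact Ha.
    + destruct (HF d Hd) as [x [Hnx Hdx]].
      apply Hdd in Hdx. destruct Hdx as [i [Hi Hvi]].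
      destruct (IH i Hi) as [y [Xy Cy]].
      exists y. split; [exact Xy|]. apply Hee. exists i. split; [exact Hi|].
      split; [exact Cy|]. intro Heq. apply Hnx. rewrite <- Hvi, <- Heq. exact Xy.
  - intros [X [HE HF]]. exists X. split; [|exact HF].
    intros A HA. apply HE. apply rc_base. exact HA.
Qed.
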